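(* Let $\pi$ be an $r$-homogeneous strongly log-concave distribution with associated matroid $\mathcal{M}=(E,\mathcal{I})$, and let $I\in\mathcal{I}$ with $|I|\le r-2$. Then the modified log-Sobolev constant of the walk $P^{\wedge}_{I,1}$ satisfies $\rho(P^{\wedge}_{I,1})\ge\frac12$.
   Context: $\pi:2^{[n]}\to\mathbb{R}_{\ge0}$ has generating polynomial $g_\pi(x)=\sum_S\pi(S)\prod_{i\in S}x_i$; $r$-homogeneous means the support consists of $r$-sets; strongly log-concave means for every $J\subseteq[n]$, $\nabla^2\log(\partial_J g_\pi)$ is negative semidefinite at the all-ones vector. The support $\mathcal{B}$ is the set of bases of a rank-$r$ matroid $\mathcal{M}=(E,\mathcal{I})$. Weights: $w(J)=(r-|J|)!\sum_{B\in\mathcal{B},B\supseteq J}\pi(B)$ for $J\in\mathcal{I}$, $w(J)=0$ otherwise. Let $\Omega_I=\{v\in E\setminus I: I\cup\{v\}\in\mathcal{I}\}$ with distribution $\pi_{I,1}(v)=w(I\cup\{v\})/w(I)$. The walk $P^{\wedge}_{I,1}$ on $\Omega_I$: $P^{\wedge}_{I,1}(u,u)=\frac12$; $P^{\wedge}_{I,1}(u,v)=\frac{w(I\cup\{u,v\})}{2w(I\cup\{u\})}$ if $u\neq v$ and $I\cup\{u,v\}\in\mathcal{I}$; $0$ otherwise. It is reversible with stationary distribution $\pi_{I,1}$. For reversible $P$ with stationary $\mu$: $\mathcal{E}_P(f,g)=\sum_{x,y}\mu(x)f(x)[I-P](x,y)g(y)$, $\mathrm{Ent}_\mu(f)=\mathbb{E}_\mu(f\log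 f)-\mathbb{E}_\mu f\log\mathbb{E}_\mu f$ ($0\log0=0$), $\rho(P)=\inf\{\mathcal{E}_P(f,\log f)/\mathrm{Ent}_\mu(f): f\ge0,\ \mathrm{Ent}_\mu(f)\ne0\}$. *)

(* Defs.v *)
From HB Require Import structures.
From mathcomp Require Import all_boot all_order all_algebra.
From mathcomp Require Import mpoly.
From mathcomp Require Import all_classical all_reals all_analysis.
Set Implicit Arguments. Unset Strict Implicit. Unset Printing Implicit Defensive.
Import Order.TTheory GRing.Theory Num.Theory.
Local Open Scope ring_scope.

Section SLC.
Variables (R : realType) (n : nat).
Implicit Types (pi : {set 'I_n} -> R).

Definition genpoly pi : mpoly.mpoly n R :=
  \sum_(S : {set 'I_n}) pi S *: \prod_(i in S) mpoly.mpolyX R (mpoly.mnm1 i).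

Definition partialJ (J : {set 'I_n}) (p : mpoly.mpoly n R) : mpoly.mpoly n R :=
  foldr (fun i q => mpoly.mderiv i q) p (enum J).

Definition ones : 'I_n -> R := fun _ => 1.

(* Hessian of log h at the point a (for h(a) > 0), entries
   d^2/dx_i dx_j log h = (h * h_ij - h_i * h_j) / h^2. *)
Definition hess_log (h : mpoly.mpoly n R) (a : 'I_n -> R) (i j : 'I_n) : R :=
  (mpoly.meval a h * mpoly.meval a (mpoly.mderiv j (mpoly.mderiv i h))
   - mpoly.meval a (mpoly.mderiv i h) * mpoly.meval a (mpoly.mderiv j h))
  / (mpoly.meval a h) ^+ 2.

Definition nsd (M : 'I_n -> 'I_n -> R) : Prop :=
  forall v : 'I_n -> R, \sum_i \sum_j v i * M i j * v j <= 0.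

Definition homogeneous pi (r : nat) : Prop :=
  forall S, pi S != 0 -> #|S| = r.

(* strongly log-concave: for every J, Hess(log d_J g) at 1 is NSD
   (d_J g has nonnegative coefficients, so log d_J g is defined at 1
   exactly when d_J g is not the zero polynomial, i.e. d_J g(1) <> 0). *)
Definition strongly_log_concave pi : Prop :=
  forall J : {set 'I_n},
    mpoly.meval ones (partialJ J (genpoly pi)) != 0 ->
    nsd (hess_log (partialJ J (genpoly pi)) ones).

Definition pi_support pi : {set {set 'I_n}} := [set S | pi S != 0].

Definition matroid_bases (B : {set {set 'I_n}}) : Prop :=
  (exists B0 : {set 'I_n}, B0 \in B) /\
  forall B1 B2 : {set 'I_n}, B1 \in B -> B2 \in B -> forall x, x \in B1 :\: B2 ->
    exists2 y, y \in B2 :\: B1 & y |: (B1 :\ x) \in B.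

Definition indep (B : {set {set 'I_n}}) (J : {set 'I_n}) : bool :=
  [exists S in B, J \subset S].

Definition weight pi (r : nat) (J : {set 'I_n}) : R :=
  if indep (pi_support pi) J then
    ((r - #|J|)`!)%:R * \sum_(S in pi_support pi | J \subset S) pi S
  else 0.

Definition Omega pi (I : {set 'I_n}) : {set 'I_n} :=
  [set v | (v \notin I) && indep (pi_support pi) (v |: I)].

Definition piI1 pi r I (v : 'I_n) : R := weight pi r (v |: I) / weight pi r I.

Definition Pwedge pi r I (u v : 'I_n) : R :=
  if u == v then 2^-1
  else if indep (pi_support pi) (u |: (v |: I)) then
    weight pi r (u |: (v |: I)) / (2 * weight pi r (u |: I))
  else 0.

Definition elog (x : R) : \bar R := if 0 < x then (ln x)%:E else -oo%E.

Definition dirichlet_log (Om : {set 'I_n}) (mu : 'I_n -> R)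
    (P : 'I_n -> 'I_n -> R) (f : 'I_n -> R) : \bar R :=
  (\sum_(x in Om) \sum_(y in Om)
     (mu x * f x * ((x == y)%:R - P x y))%:E * elog (f y))%E.

Definition xlogx (x : R) : R := if x == 0 then 0 else x * ln x.

Definition expect (Om : {set 'I_n}) (mu : 'I_n -> R) (f : 'I_n -> R) : R :=
  \sum_(x in Om) mu x * f x.

Definition Ent (Om : {set 'I_n}) (mu : 'I_n -> R) (f : 'I_n -> R) : R :=
  expect Om mu (fun x => xlogx (f x)) - xlogx (expect Om mu f).

Definition mlsc (Om : {set 'I_n}) (mu : 'I_n -> R)
    (P : 'I_n -> 'I_n -> R) : \bar R :=
  ereal_inf [set (dirichlet_log Om mu P f * ((Ent Om mu f)^-1)%:E)%E
            | f in [set f : 'I_n -> R |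
                    (forall x, x \in Om -> 0 <= f x) /\ Ent Om mu f != 0]].

End SLC.

(* Main.v *)
Require Import Defs.
From HB Require Import structures.
From mathcomp Require Import all_boot all_order all_algebra.
From mathcomp Require Import mpoly.
From mathcomp Require Import ring zify lra.
From mathcomp Require Import all_classical all_reals all_analysis.
Import Order.TTheory GRing.Theory Num.Theory.
Set Implicit Arguments. Unset Strict Implicit. Unset Printing Implicit Defensive.
Local Open Scope ring_scope.

Section Poly.
Variables (R : realType) (n : nat).

Definition PX (T : {set 'I_n}) : mpoly.mpoly n R :=
  \prod_(i in T) mpoly.mpolyX R (mpoly.mnm1 i).

Lemma mderivXU (i j : 'I_n) :
  mpoly.mderiv i (mpoly.mpolyX R (mpoly.mnm1 j)) = (i == j)%:R.
Proof.
rewrite mpoly.mderivX mpoly.mnm1E eq_sym.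
case: eqP => [->|_]; last by rewrite scale0r.
rewrite scale1r.
have -> : (mpoly.mnm1 j - mpoly.mnm1 j)%MM = 0%MM.
  by apply/mpoly.mnmP => k; rewrite mpoly.mnmBE subnn mpoly.mnm0E.
by rewrite mpoly.mpolyX0.
Qed.

Lemma mderiv_PX0 (i : 'I_n) (T : {set 'I_n}) : i \notin T ->
  mpoly.mderiv i (PX T) = 0.
Proof.
move=> iT; rewrite /PX.
apply: (big_ind (fun p => mpoly.mderiv i p = 0)).
- by rewrite -(mpoly.mpolyC1) mpoly.mderivC.
- by move=> x y hx hy; rewrite mpoly.mderivM hx hy mul0r mulr0 addr0.
- move=> j jT; rewrite mderivXU; case: eqP => // ij.
  by move: iT; rewrite ij jT.
Qed.

Lemma mderiv_PX (i : 'I_n) (T : {set 'I_n}) :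
  mpoly.mderiv i (PX T) = if i \in T then PX (T :\ i) else 0.
Proof.
case: ifP => iT; last by rewrite mderiv_PX0 // iT.
rewrite /PX (bigD1 i) //=.
have -> : \prod_(j in T | j != i) mpoly.mpolyX R (mpoly.mnm1 j) = PX (T :\ i).
  by rewrite /PX; apply: eq_bigl => j; rewrite !inE andbC.
rewrite mpoly.mderivM mderivXU eqxx mul1r.
by rewrite (@mderiv_PX0 i (T :\ i)) ?setD11 // mulr0 addr0.
Qed.

Lemma meval_PX (T : {set 'I_n}) : mpoly.meval (@ones R n) (PX T) = 1.
Proof.
rewrite /PX; apply: (big_ind (fun p => mpoly.meval (@ones R n) p = 1)).
- by rewrite mpoly.meval1.
- by move=> x y hx hy; rewrite mpoly.mevalM hx hy mulr1.
- by move=> j _; rewrite mpoly.mevalXU.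
Qed.

Lemma foldr_PX (s : seq 'I_n) (T : {set 'I_n}) :
  foldr (fun i q => mpoly.mderiv i q) (PX T) s =
  if uniq s && all (fun i => i \in T) s then PX (T :\: [set i in s]) else 0.
Proof.
elim: s => [|a s IH] /=.
  by congr PX; apply/setP => j; rewrite !inE.
rewrite IH; case: (boolP (uniq s && all _ s)) => /= h; last first.
  rewrite mpoly.mderiv0.
  by case: (a \notin s) (a \in T) h => [] [] //; case: (uniq s) => //; case: all.
case/andP: h => -> ->; rewrite mderiv_PX !andbT !inE.
case: (boolP (a \in s)) => aS /=; first by [].
case: (a \in T) => //.
congr PX; apply/setP => j; rewrite !inE.
by case: (j =P a) => [->|] /=; rewrite ?(negbTE aS) ?andbF //= ?andbT.
Qed.


End Poly.

Section Gen.
Variables (R : realType) (n : nat) (pi : {set 'I_n} -> R).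

Definition Cs (T : {set 'I_n}) : R := \sum_(S : {set 'I_n} | T \subset S) pi S.

Lemma foldr_sum (s : seq 'I_n) (I : Type) (r : seq I) (F : I -> mpoly.mpoly n R) :
  foldr (fun i q => mpoly.mderiv i q) (\sum_(j <- r) F j) s =
  \sum_(j <- r) foldr (fun i q => mpoly.mderiv i q) (F j) s.
Proof.
elim: s => [|a s IH] //=; rewrite IH.
by rewrite (big_morph _ (@mpoly.mderivD _ _ a) (@mpoly.mderiv0 _ _ a)).
Qed.

Lemma foldr_scale (s : seq 'I_n) c (p : mpoly.mpoly n R) :
  foldr (fun i q => mpoly.mderiv i q) (c *: p) s =
  c *: foldr (fun i q => mpoly.mderiv i q) p s.
Proof. by elim: s => [|a s IH] //=; rewrite IH mpoly.mderivZ. Qed.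

Lemma meval_foldr (s : seq 'I_n) :
  mpoly.meval (@ones R n) (foldr (fun i q => mpoly.mderiv i q) (genpoly pi) s) =
  if uniq s then Cs [set i in s] else 0.
Proof.
rewrite /genpoly foldr_sum.
rewrite (big_morph _ (mpoly.mevalD _) (mpoly.meval0 _)).
under eq_bigr => S _ do rewrite foldr_scale mpoly.mevalZ -/(PX R S) foldr_PX.
case: (boolP (uniq s)) => us /=; last first.
  by apply: big1 => S _; rewrite mpoly.meval0 mulr0.
rewrite /Cs [RHS]big_mkcond /=; apply: eq_bigr => S _.
have -> : all (fun i => i \in S) s = ([set i in s] \subset S).
  apply/idP/idP.
    by move/allP => h; apply/fintype.subsetP => x; rewrite inE; apply: h.
  by move/fintype.subsetP => h; apply/allP => x xs; apply: h; rewrite inE.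
by case: ifP; rewrite ?meval_PX ?mpoly.meval0 ?mulr1 ?mulr0.
Qed.

End Gen.

Section Count.
Variables (R : realType) (n : nat) (pi : {set 'I_n} -> R) (r : nat).
Hypothesis pi_ge0 : forall S, 0 <= pi S.
Hypothesis hhom : homogeneous pi r.

Lemma Cs_count (T : {set 'I_n}) :
  \sum_(v | v \notin T) Cs pi (v |: T) = (r - #|T|)%:R * Cs pi T.
Proof.
transitivity (\sum_v \sum_(S : {set 'I_n})
   (if (v \notin T) && (v |: T \subset S) then pi S else 0)).
  rewrite big_mkcond; apply: eq_bigr => v _; case: ifP => hv /=.
    by rewrite /Cs big_mkcond.
  by rewrite big1.
rewrite exchange_big /Cs big_distrr /= [RHS]big_mkcond; apply: eq_bigr => S _.
rewrite -big_mkcond /=.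
case: (boolP (T \subset S)) => TS; last first.
  by apply: big1 => v; rewrite finset.subUset (negbTE TS) !andbF.
transitivity (\sum_(v in S :\: T) pi S).
  by apply: eq_bigl => v; rewrite !inE finset.subUset finset.sub1set TS andbT.
rewrite sumr_const.
case: (eqVneq (pi S) 0) => [->|pS0]; first by rewrite mulr0 mul0rn.
rewrite cardsD (finset.setIidPr TS) (hhom pS0) -mulr_natl mulrC.
by rewrite mulr1 mulr_natr.
Qed.

End Count.

Section Lor.
Variables (R : realType) (n : nat).

Definition QF (M : 'I_n -> 'I_n -> R) (v : 'I_n -> R) := \sum_i \sum_j v i * M i j * v j.
Definition LF (hp : 'I_n -> R) (v : 'I_n -> R) := \sum_i hp i * v i.

Lemma QF_hess (h : R) (hp : 'I_n -> R) (H : 'I_n -> 'I_n -> R) (v : 'I_n -> R) : h != 0 ->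
  QF (fun i j => (h * H i j - hp i * hp j) / h ^+ 2) v =
  (h * QF H v - LF hp v ^+ 2) / h ^+ 2.
Proof.
move=> h0; rewrite /QF /LF.
rewrite [X in _ - X]expr2 big_distrl /=.
rewrite big_distrr /= -sumrB mulr_suml; apply: eq_bigr => i _.
rewrite !big_distrr /= -sumrB mulr_suml; apply: eq_bigr => j _.
by field.
Qed.

Lemma QF_shift (H : 'I_n -> 'I_n -> R) (v : 'I_n -> R) (a : R) :
  QF H (fun i => v i - a) =
  QF H v - a * \sum_i \sum_j H i j * v j - a * \sum_i v i * \sum_j H i j
  + a ^+ 2 * \sum_i \sum_j H i j.
Proof.
rewrite /QF !big_distrr /= -!sumrB -big_split /=; apply: eq_bigr => i _.
rewrite !big_distrr /= -!sumrB -big_split /=; apply: eq_bigr => j _.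
by ring.
Qed.

Lemma lor (h k : R) (hp : 'I_n -> R) (H : 'I_n -> 'I_n -> R) :
  0 < h -> 0 < k ->
  (forall i, \sum_j H i j = (k - 1) * hp i) ->
  (forall i j, H i j = H j i) ->
  \sum_i hp i = k * h ->
  (forall w, QF (fun i j => (h * H i j - hp i * hp j) / h ^+ 2) w <= 0) ->
  forall v, h * QF H v <= (k - 1) / k * LF hp v ^+ 2.
Proof.
move=> h0 k0 rowH symH sumhp nsdM v.
set a := LF hp v / (k * h).
have := nsdM (fun i => v i - a).
rewrite QF_hess ?gt_eqF // QF_shift.
have e1 : \sum_i \sum_j H i j * v j = (k - 1) * LF hp v.
  rewrite exchange_big /LF big_distrr /=; apply: eq_bigr => j _.
  rewrite -mulr_suml.
  under eq_bigr => i _ do rewrite symH.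
  by rewrite rowH mulrA.
have e2 : \sum_i v i * \sum_j H i j = (k - 1) * LF hp v.
  rewrite /LF big_distrr /=; apply: eq_bigr => i _.
  by rewrite rowH; ring.
have e3 : \sum_i \sum_j H i j = (k - 1) * (k * h).
  by under eq_bigr => i _ do rewrite rowH; rewrite -big_distrr /= sumhp.
have e4 : LF hp (fun i => v i - a) = LF hp v - a * (k * h).
  rewrite /LF -sumhp big_distrr /= -sumrB; apply: eq_bigr => i _; ring.
rewrite e1 e2 e3 e4 /a.
set L := LF hp v; set B := QF H v.
move=> hle.
have hh : 0 < h ^+ 2 by rewrite exprn_gt0.
rewrite -subr_le0.
suff -> : h * B - (k - 1) / k * L ^+ 2 =
  (h * (B - L / (k * h) * ((k - 1) * L) - L / (k * h) * ((k - 1) * L) +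
   (L / (k * h)) ^+ 2 * ((k - 1) * (k * h))) - (L - L / (k * h) * (k * h)) ^+ 2) / h ^+ 2 * h ^+ 2.
  by rewrite pmulr_lle0.
by field; rewrite ?gt_eqF.
Qed.

End Lor.

Section Main.
Variables (R : realType) (n : nat) (pi : {set 'I_n} -> R) (r : nat) (I : {set 'I_n}).
Hypothesis pi_ge0 : forall S, 0 <= pi S.
Hypothesis hhom : homogeneous pi r.

Lemma Cs_ge0 (T : {set 'I_n}) : 0 <= Cs pi T.
Proof. by apply: sumr_ge0 => S _. Qed.

Lemma Cs_nindep (T : {set 'I_n}) : ~~ indep (pi_support pi) T -> Cs pi T = 0.
Proof.
move=> hT; apply: big1 => S TS; apply/eqP; apply: contraNT hT => hS.
by apply/existsP; exists S; rewrite inE hS TS.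
Qed.

Lemma Cs_indep (T : {set 'I_n}) : indep (pi_support pi) T -> 0 < Cs pi T.
Proof.
case/existsP => S /andP []; rewrite inE => hS TS.
rewrite /Cs (bigD1 S) //= ltr_pwDl //; first by rewrite lt_def hS pi_ge0.
by apply: sumr_ge0 => S' _.
Qed.

Lemma indep_sub (T T' : {set 'I_n}) : T \subset T' -> indep (pi_support pi) T' -> indep (pi_support pi) T.
Proof.
move=> TT /existsP [S /andP [hS TS]]; apply/existsP; exists S.
by rewrite hS (fintype.subset_trans TT TS).
Qed.

Lemma weightE (J : {set 'I_n}) : weight pi r J = ((r - #|J|)`!)%:R * Cs pi J.
Proof.
rewrite /weight; case: ifP => hJ; last by rewrite Cs_nindep ?hJ // mulr0.
congr (_ * _); rewrite /Cs [RHS]big_mkcond [LHS]big_mkcond; apply: eq_bigr => S _.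
rewrite inE.
by case: eqP => [->|_] /=; case: ifP.
Qed.


Definition hpv (i : 'I_n) : R := if i \in I then 0 else Cs pi (i |: I).
Definition Hm (i j : 'I_n) : R :=
  if (i == j) || (i \in I) || (j \in I) then 0 else Cs pi (j |: (i |: I)).

Lemma h_eq : mpoly.meval (@ones R n) (partialJ I (genpoly pi)) = Cs pi I.
Proof.
rewrite /partialJ meval_foldr enum_uniq; congr Cs.
by apply/setP => x; rewrite !inE mem_enum.
Qed.

Lemma hp_eq i : mpoly.meval (@ones R n) (mpoly.mderiv i (partialJ I (genpoly pi))) = hpv i.
Proof.
rewrite /partialJ.
have -> : mpoly.mderiv i (foldr (fun i q => mpoly.mderiv i q) (genpoly pi) (enum I))
  = foldr (fun i q => mpoly.mderiv i q) (genpoly pi) (i :: enum I) by [].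
rewrite meval_foldr /= mem_enum enum_uniq andbT /hpv.
case: (i \in I) => //=; congr Cs.
by apply/setP => x; rewrite !inE mem_enum.
Qed.

Lemma H_eq i j : mpoly.meval (@ones R n)
  (mpoly.mderiv j (mpoly.mderiv i (partialJ I (genpoly pi)))) = Hm i j.
Proof.
rewrite /partialJ.
have -> : mpoly.mderiv j (mpoly.mderiv i (foldr (fun i q => mpoly.mderiv i q) (genpoly pi) (enum I)))
  = foldr (fun i q => mpoly.mderiv i q) (genpoly pi) (j :: i :: enum I) by [].
rewrite meval_foldr /= !in_cons !mem_enum enum_uniq andbT /Hm.
rewrite (eq_sym j i); case: (i == j); case: (i \in I); case: (j \in I) => //=.
congr Cs; by apply/setP => x; rewrite !inE mem_enum.
Qed.

Lemma hess_eq i j : hess_log (partialJ I (genpoly pi)) (@ones R n) i j =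
  (Cs pi I * Hm i j - hpv i * hpv j) / Cs pi I ^+ 2.
Proof. by rewrite /hess_log h_eq !hp_eq H_eq. Qed.

Lemma card_U1 (i : 'I_n) (T : {set 'I_n}) : i \notin T -> #|i |: T| = #|T|.+1.
Proof. by move=> iT; rewrite cardsU1 iT. Qed.

Hypothesis Ile : (#|I| + 2 <= r)%N.

Definition kk : R := (r - #|I|)%:R.

Lemma kk_eq : (r - #|I|.+1)%:R = kk - 1.
Proof.
have h : (r - #|I| = (r - #|I|.+1).+1)%N.
  rewrite subnS prednK // subn_gt0; apply: leq_trans Ile.
  by rewrite addn2 leqnSn.
by rewrite /kk h -natr1 addrK.
Qed.

Lemma rowH i : \sum_j Hm i j = (kk - 1) * hpv i.
Proof.
rewrite /hpv; case: (boolP (i \in I)) => iI.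
  by rewrite mulr0; apply: big1 => j _; rewrite /Hm iI orbT.
rewrite -kk_eq -(card_U1 iI) -(Cs_count hhom) [RHS]big_mkcond [LHS]big_mkcond /=.
apply: eq_bigr => j _; rewrite /Hm (negbTE iI) orbF !inE eq_sym.
by case: (j == i); case: (j \in I).
Qed.


Lemma symH i j : Hm i j = Hm j i.
Proof.
rewrite /Hm (eq_sym i j); case: (j == i); case: (i \in I); case: (j \in I) => //=.
by rewrite finset.setUCA.
Qed.

Lemma sumhp : \sum_i hpv i = kk * Cs pi I.
Proof.
rewrite /kk -(Cs_count hhom) [RHS]big_mkcond /=; apply: eq_bigr => i _.
by rewrite /hpv; case: (i \in I).
Qed.

End Main.

Section Real.
Variables (R : realType) (n : nat).

Lemma ln_le_sub1 (x : R) : 0 < x -> ln x <= x - 1.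
Proof.
move=> x0; have := expR_ge1Dx (ln x); rewrite lnK ?posrE //.
by move=> h; rewrite lerBrDl.
Qed.

Lemma ln_tangent (t c : R) : 0 < t -> 0 < c -> ln t <= ln c + t / c - 1.
Proof.
move=> t0 c0; have := ln_le_sub1 (divr_gt0 t0 c0).
rewrite ln_div ?posrE // => h.
by rewrite -addrA -lerBlDl.
Qed.

Lemma key_bnd (Om : {set 'I_n}) (A : 'I_n -> 'I_n -> R) (f : 'I_n -> R) (c : R) :
  (forall x y, x \in Om -> y \in Om -> 0 <= A x y) -> (forall x, x \in Om -> 0 <= f x) ->
  (forall x y, x \in Om -> y \in Om -> 0 < A x y -> 0 < f x -> 0 < f y) -> 0 < c ->
  \sum_(x in Om) \sum_(y in Om) A x y * f x * ln (f y) <=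
  (\sum_(x in Om) \sum_(y in Om) A x y * f x) * ln c +
  (\sum_(x in Om) \sum_(y in Om) A x y * f x * f y) / c -
  (\sum_(x in Om) \sum_(y in Om) A x y * f x).
Proof.
move=> A0 f0 Apos c0.
have -> : (\sum_(x in Om) \sum_(y in Om) A x y * f x) * ln c +
  (\sum_(x in Om) \sum_(y in Om) A x y * f x * f y) / c -
  (\sum_(x in Om) \sum_(y in Om) A x y * f x) =
  \sum_(x in Om) \sum_(y in Om) A x y * f x * (ln c + f y / c - 1).
  rewrite !mulr_suml -big_split -sumrB /=; apply: eq_bigr => x _.
  rewrite !mulr_suml -big_split -sumrB /=; apply: eq_bigr => y _.
  by ring.
apply: ler_sum => x xO; apply: ler_sum => y yO.
have h0 : 0 <= A x y * f x by rewrite mulr_ge0 ?A0 ?f0.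
case: (eqVneq (A x y * f x) 0) => [->|hne]; first by rewrite !mul0r.
have hA : 0 < A x y by rewrite lt_def A0 // andbT; apply: contraNneq hne => ->; rewrite mul0r.
have hf : 0 < f x by rewrite lt_def f0 // andbT; apply: contraNneq hne => ->; rewrite mulr0.
apply: ler_wpM2l => //; apply: ln_tangent => //.
exact: (Apos x y xO yO hA hf).
Qed.

Lemma key (Om : {set 'I_n}) (A : 'I_n -> 'I_n -> R) (f : 'I_n -> R) :
  (forall x y, x \in Om -> y \in Om -> 0 <= A x y) -> (forall x, x \in Om -> 0 <= f x) ->
  (forall x y, x \in Om -> y \in Om -> 0 < A x y -> 0 < f x -> 0 < f y) ->
  0 < \sum_(x in Om) \sum_(y in Om) A x y ->
  (\sum_(x in Om) \sum_(y in Om) A x y) * (\sum_(x in Om) \sum_(y in Om) A x y * f x * f y)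
    <= (\sum_(x in Om) \sum_(y in Om) A x y * f x) ^+ 2 ->
  \sum_(x in Om) \sum_(y in Om) A x y * f x * ln (f y) <=
  (\sum_(x in Om) \sum_(y in Om) A x y * f x) *
     ln ((\sum_(x in Om) \sum_(y in Om) A x y * f x) / \sum_(x in Om) \sum_(y in Om) A x y).
Proof.
move=> A0 f0 Apos.
set Z := \sum_(x in Om) \sum_(y in Om) A x y.
set S := \sum_(x in Om) \sum_(y in Om) A x y * f x.
set Q := \sum_(x in Om) \sum_(y in Om) A x y * f x * f y.
move=> Z0 hZQ.
have S0 : 0 <= S by apply: sumr_ge0 => x xO; apply: sumr_ge0 => y yO; rewrite mulr_ge0 ?A0 ?f0.
case: (eqVneq S 0) => [S00|Sne].
  have := key_bnd A0 f0 Apos ltr01; rewrite -/S -/Q S00 ln1 !mul0r subr0 divr1 add0r.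
  move=> h; apply: (le_trans h).
  move: hZQ; rewrite S00 expr0n /= => hZQ.
  by rewrite -(pmulr_rle0 _ Z0).
have Sp : 0 < S by rewrite lt_def Sne S0.
have := key_bnd A0 f0 Apos (divr_gt0 Sp Z0); rewrite -/S -/Q => h; apply: (le_trans h).
rewrite -addrA gerDl subr_le0 invf_div mulrA ler_pdivrMr // mulrC -expr2.
exact: hZQ.
Qed.

Lemma jens (Om : {set 'I_n}) (mu f : 'I_n -> R) :
  (forall x, x \in Om -> 0 <= mu x) -> \sum_(x in Om) mu x = 1 ->
  (forall x, x \in Om -> 0 <= f x) ->
  xlogx (\sum_(x in Om) mu x * f x) <= \sum_(x in Om) mu x * xlogx (f x).
Proof.
move=> mu0 mu1 f0.
set F := \sum_(x in Om) mu x * f x.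
have F0 : 0 <= F by apply: sumr_ge0 => x xO; rewrite mulr_ge0 ?mu0 ?f0.
case: (eqVneq F 0) => [FF|Fne].
  rewrite FF /xlogx eqxx; apply: sumr_ge0 => x xO.
  have := psumr_eq0P (fun i (iO : i \in Om) => mulr_ge0 (mu0 i iO) (f0 i iO)) FF xO.
  by move/eqP; rewrite mulf_eq0 => /orP [/eqP -> | /eqP ->]; rewrite ?mul0r // eqxx mulr0.
have Fp : 0 < F by rewrite lt_def Fne F0.
have -> : xlogx F = \sum_(x in Om) mu x * (f x * ln F + f x - F).
  rewrite /xlogx (negbTE Fne).
  under eq_bigr => x _ do rewrite mulrBr mulrDr.
  rewrite sumrB big_split /= -!mulr_suml -/F mu1.
  under eq_bigr => x _ do rewrite mulrA.
  rewrite -mulr_suml -/F; ring.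
apply: ler_sum => x xO; apply: ler_wpM2l; first exact: mu0.
rewrite /xlogx; case: (eqVneq (f x) 0) => [->|fne].
  by rewrite mul0r !add0r oppr_le0 ltW.
have fp : 0 < f x by rewrite lt_def fne f0.
have := ln_tangent Fp fp => h.
rewrite -subr_le0.
have -> : f x * ln F + f x - F - f x * ln (f x) = f x * (ln F - (ln (f x) + F / f x - 1)).
  by field; rewrite gt_eqF.
by rewrite pmulr_rle0 // subr_le0.
Qed.

End Real.

Section Final.
Variables (R : realType) (n : nat) (pi : {set 'I_n} -> R) (r : nat) (I : {set 'I_n}).
Hypothesis pi_ge0 : forall S, 0 <= pi S.
Hypothesis hhom : homogeneous pi r.
Hypothesis slc : strongly_log_concave pi.
Hypothesis hI : indep (pi_support pi) I.
Hypothesis Ile : (#|I| + 2 <= r)%N.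

Local Notation Om := (Omega pi I).
Local Notation mu := (piI1 pi r I).
Local Notation P := (Pwedge pi r I).
Local Notation c0 := (Cs pi I).
Local Notation k := (kk R r I).
Local Notation Hm := (Hm pi I).
Local Notation hpv := (hpv pi I).

Lemma c0_gt0 : 0 < c0.
Proof. exact: Cs_indep. Qed.

Definition m := (r - #|I|.+2)%N.

Lemma m_eq0 : (r - #|I| = m.+2)%N.
Proof. rewrite /m; move: Ile; lia. Qed.

Lemma m_eq1 : (r - #|I|.+1 = m.+1)%N.
Proof. rewrite /m; move: Ile; lia. Qed.

Lemma k_eq : k = m.+2%:R.
Proof. by rewrite /kk m_eq0. Qed.

Lemma k_gt0 : 0 < k.
Proof. by rewrite k_eq ltr0n. Qed.

Lemma k1_eq : k - 1 = m.+1%:R.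
Proof. by rewrite k_eq -natr1 addrK. Qed.

Lemma k1_gt0 : 0 < k - 1.
Proof. by rewrite k1_eq ltr0n. Qed.

Lemma inOm x : (x \in Om) = (x \notin I) && indep (pi_support pi) (x |: I).
Proof. by rewrite inE. Qed.

Lemma Om_pos x : x \in Om -> 0 < Cs pi (x |: I).
Proof. by rewrite inOm => /andP [_ h]; exact: Cs_indep. Qed.

Lemma hpv_Om x : hpv x = if x \in Om then Cs pi (x |: I) else 0.
Proof.
rewrite /hpv inOm; case: (x \in I) => //=.
by case: ifP => // h; rewrite Cs_nindep ?h.
Qed.

Lemma Hm_out x y : ~~ ((x \in Om) && (y \in Om)) -> Hm x y = 0.
Proof.
rewrite !inOm /Hm => h.
case: (x == y) => //; case: (boolP (x \in I)) => //= xI; case: (boolP (y \in I)) => //= yI.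
apply: Cs_nindep; move: h; rewrite xI yI /= => h.
apply: contra h => hi; apply/andP; split.
  by apply: indep_sub hi; rewrite finset.subsetUr.
by apply: indep_sub hi; rewrite finset.setUCA finset.subsetUr.
Qed.

Lemma Hm_ge0 x y : 0 <= Hm x y.
Proof. by rewrite /Hm; case: ifP => // _; exact: Cs_ge0. Qed.

Lemma Hmxx x : Hm x x = 0.
Proof. by rewrite /Hm eqxx. Qed.

Lemma mu_eq x : x \in Om -> mu x = Cs pi (x |: I) / (k * c0).
Proof.
move=> xO; move: (xO); rewrite inOm => /andP [xI _].
rewrite /piI1 !weightE card_U1 // m_eq1 m_eq0 k_eq !factS.
have c0p := c0_gt0.
have f0 : (m`!)%:R != 0 :> R by rewrite pnatr_eq0 -lt0n fact_gt0.
have cp := Om_pos xO.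
rewrite !natrM; field.
by rewrite f0 !gt_eqF //= ?pnatr_eq0.
Qed.

Lemma mu_gt0 x : x \in Om -> 0 < mu x.
Proof. move=> xO; rewrite mu_eq // divr_gt0 ?Om_pos ?mulr_gt0 ?k_gt0 ?c0_gt0 //. Qed.

Lemma weight_ge0 J : 0 <= weight pi r J.
Proof. by rewrite weightE mulr_ge0 ?ler0n ?Cs_ge0. Qed.

Lemma P_ge0 x y : 0 <= P x y.
Proof.
rewrite /Pwedge; case: ifP => _; first by rewrite invr_ge0 ler0n.
case: ifP => // _; apply: divr_ge0; first exact: weight_ge0.
by rewrite mulr_ge0 ?ler0n ?weight_ge0.
Qed.

Definition Z := k * (k - 1) * c0.

Lemma Z_gt0 : 0 < Z.
Proof. by rewrite /Z !mulr_gt0 ?k_gt0 ?k1_gt0 ?c0_gt0. Qed.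

Lemma muP x y : x \in Om -> y \in Om ->
  mu x * P x y = if x == y then mu x / 2 else Hm x y / (2 * Z).
Proof.
move=> xO yO; rewrite /Pwedge; case: eqP => [_|/eqP xy]; first by rewrite mulrC.
move: (xO) (yO); rewrite !inOm => /andP [xI _] /andP [yI _].
have Hmxy : Hm x y = Cs pi (x |: (y |: I)).
  by rewrite /Hm (negbTE xy) (negbTE xI) (negbTE yI) /= finset.setUCA.
have -> : (if indep (pi_support pi) (x |: (y |: I))
   then weight pi r (x |: (y |: I)) / (2 * weight pi r (x |: I)) else 0)
   = weight pi r (x |: (y |: I)) / (2 * weight pi r (x |: I)).
  case: ifP => // hn; by rewrite /weight hn mul0r.
have cxy : #|x |: (y |: I)| = #|I|.+2.
  rewrite card_U1 ?card_U1 //.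
  by rewrite !inE negb_or xy.
rewrite mu_eq // Hmxy /Z !weightE cxy card_U1 // m_eq1 /m.
have -> : (r - #|I|.+2)%N = m by [].
rewrite k_eq -natr1 addrK !factS.
have cp := Om_pos xO; have c0p := c0_gt0.
have f0 : m`!%:R != 0 :> R by rewrite pnatr_eq0 -lt0n fact_gt0.
rewrite !natrM; field.
by rewrite f0 !gt_eqF //= ?pnatr_eq0 ?andbT.
Qed.


Lemma sumOm_C : \sum_(x in Om) Cs pi (x |: I) = k * c0.
Proof.
rewrite -(sumhp I hhom) big_mkcond; apply: eq_bigr => x _.
by rewrite hpv_Om.
Qed.

Lemma rowOm x : x \in Om -> \sum_(y in Om) Hm x y = (k - 1) * Cs pi (x |: I).
Proof.
move=> xO; rewrite big_mkcond /=.
transitivity (\sum_y Hm x y).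
  apply: eq_bigr => y _; case: ifP => // yO; rewrite Hm_out // yO andbF //.
by rewrite (rowH hhom Ile) hpv_Om xO.
Qed.

Lemma mu_sum : \sum_(x in Om) mu x = 1.
Proof.
rewrite (eq_bigr (fun x => Cs pi (x |: I) / (k * c0))); last by move=> x xO; rewrite mu_eq.
rewrite -mulr_suml sumOm_C mulfV // gt_eqF // mulr_gt0 ?k_gt0 ?c0_gt0 //.
Qed.

Lemma ZOm : \sum_(x in Om) \sum_(y in Om) Hm x y = Z.
Proof.
rewrite (eq_bigr (fun x => (k - 1) * Cs pi (x |: I))); last by move=> x xO; rewrite rowOm.
by rewrite -big_distrr /= sumOm_C /Z; ring.
Qed.

Lemma SOm (f : 'I_n -> R) : \sum_(x in Om) \sum_(y in Om) Hm x y * f x =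
  (k - 1) * \sum_(x in Om) Cs pi (x |: I) * f x.
Proof.
rewrite big_distrr /=; apply: eq_bigr => x xO.
by rewrite -mulr_suml rowOm // mulrA.
Qed.

Lemma FOm (f : 'I_n -> R) : \sum_(x in Om) mu x * f x =
  (\sum_(x in Om) Cs pi (x |: I) * f x) / (k * c0).
Proof.
rewrite mulr_suml; apply: eq_bigr => x xO; rewrite mu_eq //; by rewrite mulrAC.
Qed.

Lemma lorOm (f : 'I_n -> R) :
  (\sum_(x in Om) \sum_(y in Om) Hm x y) * (\sum_(x in Om) \sum_(y in Om) Hm x y * f x * f y)
    <= (\sum_(x in Om) \sum_(y in Om) Hm x y * f x) ^+ 2.
Proof.
pose v x := if x \in Om then f x else 0.
have nsdM : forall w, QF (fun i j => (c0 * Hm i j - hpv i * hpv j) / c0 ^+ 2) w <= 0.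
  move=> w.
  have hne : mpoly.meval (@ones R n) (partialJ I (genpoly pi)) != 0.
    by rewrite h_eq gt_eqF // c0_gt0.
  have := slc hne w.
  have -> : QF (fun i j => (c0 * Hm i j - hpv i * hpv j) / c0 ^+ 2) w =
    \sum_i \sum_j w i * hess_log (partialJ I (genpoly pi)) (@ones R n) i j * w j.
    by rewrite /QF; apply: eq_bigr => i _; apply: eq_bigr => j _; rewrite hess_eq.
  by [].
have hl := lor c0_gt0 k_gt0 (rowH hhom Ile) (symH pi I) (sumhp I hhom) nsdM v.
have eQ : QF Hm v = \sum_(x in Om) \sum_(y in Om) Hm x y * f x * f y.
  rewrite /QF [RHS]big_mkcond; apply: eq_bigr => x _; rewrite /v.
  case: ifP => xO; last by apply: big1 => y _; rewrite !mul0r.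
  rewrite [RHS]big_mkcond; apply: eq_bigr => y _; case: ifP => yO; first by ring.
  by rewrite mulr0.
have eL : LF hpv v = \sum_(x in Om) Cs pi (x |: I) * f x.
  rewrite /LF [RHS]big_mkcond; apply: eq_bigr => x _; rewrite /v hpv_Om.
  by case: ifP => _; rewrite ?mul0r.
rewrite eQ eL in hl.
rewrite ZOm SOm /Z.
set Q := \sum_(x in Om) \sum_(y in Om) Hm x y * f x * f y.
set L := \sum_(x in Om) Cs pi (x |: I) * f x.
have kp := k_gt0; have k1p := k1_gt0.
have h2 := ler_wpM2l (ltW (mulr_gt0 kp k1p)) hl.
have -> : ((k - 1) * L) ^+ 2 = k * (k - 1) * ((k - 1) / k * L ^+ 2).
  by field; rewrite gt_eqF.
by rewrite -mulrA.
Qed.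


Definition realD (f : 'I_n -> R) : R :=
  \sum_(x in Om) \sum_(y in Om) mu x * f x * ((x == y)%:R - P x y) * ln (f y).

Lemma realD_eq (f : 'I_n -> R) : realD f =
  (\sum_(x in Om) mu x * xlogx (f x)) / 2 -
  (\sum_(x in Om) \sum_(y in Om) Hm x y * f x * ln (f y)) / (2 * Z).
Proof.
rewrite /realD !mulr_suml -sumrB; apply: eq_bigr => x xO.
transitivity (\sum_(y in Om) ((if x == y then mu x * xlogx (f x) / 2 else 0)
   - Hm x y * f x * ln (f y) / (2 * Z))).
  apply: eq_bigr => y yO.
  have e : mu x * f x * ((x == y)%:R - P x y) * ln (f y) =
    ((x == y)%:R * mu x - mu x * P x y) * f x * ln (f y) by ring.
  rewrite e muP //; case: eqP => [<-|_]; last by rewrite mul0r; ring.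
  rewrite Hmxx /xlogx; case: eqP => [->|_]; first by rewrite /= !(mulr0, mul0r) subrr.
rewrite /= !mul0r subr0 mul1r mulrA; field.
  done.
rewrite sumrB mulr_suml.
congr (_ - _).
rewrite (bigD1 x) //= eqxx big1 ?addr0 // => y /andP [_ yx].
by rewrite eq_sym (negbTE yx).
Qed.

Lemma RI (f : 'I_n -> R) : (forall x, x \in Om -> 0 <= f x) ->
  (forall x y, x \in Om -> y \in Om -> 0 < Hm x y -> 0 < f x -> 0 < f y) ->
  Ent Om mu f / 2 <= realD f.
Proof.
move=> f0 cond.
have hk := key (fun x y _ _ => Hm_ge0 x y) f0 cond.
have hl := lorOm f.
rewrite ZOm in hk hl.
have {hk hl} := hk Z_gt0 hl.
have eS : \sum_(x in Om) \sum_(y in Om) Hm x y * f x = Z * \sum_(x in Om) mu x * f x.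
  rewrite SOm FOm /Z; have := c0_gt0; have := k_gt0 => kp cp; field.
  by rewrite !gt_eqF.
rewrite eS (mulrC Z) mulfK ?gt_eqF ?Z_gt0 //.
set F := \sum_(x in Om) mu x * f x.
set G := \sum_(x in Om) \sum_(y in Om) Hm x y * f x * ln (f y) => hG.
have hG' : G <= Z * xlogx F.
  apply: (le_trans hG); rewrite /xlogx; case: eqP => [->|_].
    by rewrite !mul0r mulr0.
  by rewrite (mulrC F) mulrA.
rewrite realD_eq /Ent /expect -/F.
set A := \sum_(x in Om) mu x * xlogx (f x).
have Zp := Z_gt0.
have e1 : G / (2 * Z) = (G / Z) / 2 by field; rewrite gt_eqF.
have e2 : G / Z <= xlogx F by rewrite ler_pdivrMr // mulrC.
rewrite e1; lra.
Qed.


Lemma f_zero (f : 'I_n -> R) x : 0 <= f x -> ~~ (0 < f x) -> f x = 0.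
Proof. by move=> h1 h2; apply/eqP; rewrite eq_le h1 andbT leNgt. Qed.

Lemma c_le0 (f : 'I_n -> R) x y : (forall x, x \in Om -> 0 <= f x) ->
  x \in Om -> y \in Om -> f y = 0 -> mu x * f x * ((x == y)%:R - P x y) <= 0.
Proof.
move=> f0 xO yO fy; case: eqP => [->|_]; first by rewrite fy mulr0 mul0r.
rewrite /= sub0r mulrN oppr_le0; apply: mulr_ge0; last exact: P_ge0.
by apply: mulr_ge0; [exact: ltW (mu_gt0 xO) | exact: f0].
Qed.

Lemma term_ne_Ny (f : 'I_n -> R) x y : (forall x, x \in Om -> 0 <= f x) ->
  x \in Om -> y \in Om ->
  ((mu x * f x * ((x == y)%:R - P x y))%:E * elog (f y) != -oo)%E.
Proof.
move=> f0 xO yO; rewrite /elog; case: ifP => // hy.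
have fy := f_zero (f0 y yO) (negbT hy).
have := c_le0 f0 xO yO fy; set c := mu x * f x * _ => hc.
case: (eqVneq c 0) => [->|cne]; first by rewrite mul0e.
by rewrite lt0_muleNy // lte_fin lt_neqAle cne.
Qed.

Lemma main_bound (f : 'I_n -> R) : (forall x, x \in Om -> 0 <= f x) ->
  Ent Om mu f != 0 ->
  ((2^-1 : R)%:E <= dirichlet_log Om mu P f * ((Ent Om mu f)^-1)%:E)%E.
Proof.
move=> f0 E0.
have Ege : 0 <= Ent Om mu f.
  by rewrite /Ent /expect subr_ge0; apply: jens => //; [move=> x xO; exact: ltW (mu_gt0 xO) | exact: mu_sum].
have Ep : 0 < Ent Om mu f by rewrite lt_def E0 Ege.
case: (boolP [exists x, exists y, [&& x \in Om, y \in Om, 0 < f x, f y == 0 & 0 < P x y]]).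
  case/existsP => x0 /existsP [y0 /and5P [x0O y0O fx0 /eqP fy0 Pxy]].
  have hD : dirichlet_log Om mu P f = +oo%E.
    have inner : forall x, x \in Om ->
        (\sum_(y in Om) (mu x * f x * ((x == y)%:R - P x y))%:E * elog (f y) != -oo)%E.
      move=> x xO; rewrite esum_eqNy; apply/existsPn => y; rewrite negb_and.
      by case: (boolP (y \in Om)) => //= yO; exact: term_ne_Ny.
    rewrite /dirichlet_log; apply/eqP; rewrite esum_eqy //.
    apply/existsP; exists x0; rewrite x0O /= esum_eqy; last first.
      by move=> y yO; exact: term_ne_Ny.
    apply/existsP; exists y0; rewrite y0O /= /elog fy0 ltxx.
    have xy : x0 != y0 by apply/eqP => e; move: fx0; rewrite e fy0 ltxx.
    rewrite (negbTE xy) /= sub0r mulrN lt0_muleNy // lte_fin oppr_lt0.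
    by rewrite mulr_gt0 // mulr_gt0 // mu_gt0.
  by rewrite hD gt0_mulye ?leey // lte_fin invr_gt0.
move=> hB.
have hBc : forall x y, x \in Om -> y \in Om -> 0 < f x -> f y = 0 -> P x y = 0.
  move=> x y xO yO fx fy; apply/eqP; rewrite eq_le P_ge0 andbT leNgt.
  apply: contra hB => Pp; apply/existsP; exists x; apply/existsP; exists y.
  by rewrite xO yO fx fy eqxx Pp.
have hD : dirichlet_log Om mu P f = (realD f)%:E.
  rewrite /dirichlet_log /realD -sumEFin; apply: eq_bigr => x xO.
  rewrite -sumEFin; apply: eq_bigr => y yO.
  rewrite /elog; case: ifP => hy //.
  have fy := f_zero (f0 y yO) (negbT hy).
  have -> : mu x * f x * ((x == y)%:R - P x y) = 0.
    case: eqP => [->|xy]; first by rewrite fy mulr0 mul0r.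
    case: (boolP (0 < f x)) => fx; first by rewrite (hBc x y) // subrr mulr0.
    by rewrite (f_zero (f0 x xO) fx) mulr0 mul0r.
  by rewrite mul0e mul0r.
have cond : forall x y, x \in Om -> y \in Om -> 0 < Hm x y -> 0 < f x -> 0 < f y.
  move=> x y xO yO Hp fx; apply/negPn/negP => hy.
  have fy := f_zero (f0 y yO) hy.
  have xy : x != y by apply/eqP => e; move: fx; rewrite e fy ltxx.
  have := muP xO yO; rewrite (negbTE xy) (hBc x y) // mulr0 => /esym /eqP.
  by rewrite mulf_eq0 invr_eq0 mulf_eq0 !gt_eqF ?Z_gt0.
rewrite hD -EFinM lee_fin ler_pdivlMr // mulrC.
exact: RI.
Qed.

End Final.

Theorem lemma5p1 (R : realType) (n r : nat) (pi : {set 'I_n} -> R)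
  (I : {set 'I_n}) :
  (forall S, 0 <= pi S) ->
  homogeneous pi r ->
  strongly_log_concave pi ->
  matroid_bases (pi_support pi) ->
  indep (pi_support pi) I ->
  (#|I| + 2 <= r)%N ->
  ((2^-1 : R)%:E <= mlsc (Omega pi I) (piI1 pi r I) (Pwedge pi r I))%E.
Proof.
move=> pi_ge0 hhom slc _ hI Ile.
apply: le_ereal_inf_tmp => _ [f [f0 E0] <-].
exact: (main_bound pi_ge0 hhom slc hI Ile f0 E0).
Qed.
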